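(* Let $q$ be a prime power and let $\mathcal{L}$ be a Cameron-Liebler line class with parameter $x$ in $\mathrm{PG}(3,q)$. Suppose there is a point $P$ and a plane $\pi$ of $\mathrm{PG}(3,q)$ with $P\in\pi$ such that (1) $(\mathsf{Line}(\pi)\setminus \mathsf{Star}(P))\cap \mathcal{L}=\emptyset$, and (2) $\mathsf{Star}(P)\setminus \mathsf{Line}(\pi)\subseteq \mathcal{L}$. Then $$\mathcal{L}':=\bigl(\mathcal{L}\cup (\mathsf{Line}(\pi)\setminus \mathsf{Star}(P))\bigr)\setminus (\mathsf{Star}(P)\setminus \mathsf{Line}(\pi))$$ is a Cameron-Liebler line class in $\mathrm{PG}(3,q)$ with the same parameter $x$.
   Context: $\mathrm{PG}(3,q)$ is the 3-dimensional projective space over $\mathbb{F}_q$. A spread of $\mathrm{PG}(3,q)$ is a set of $q^2+1$ lines partitioning the point set. A set $\mathcal{L}$ of lines is a Cameron-Liebler line class with parameter $x$ if $x$ is a non-negative integer such that $|S\cap\mathcal{L}|=x$ for every spread $S$ of $\mathrm{PG}(3,q)$. For a point $P$, $\mathsf{Star}(P)$ denotes the set of all lines through $P$; for a plane $\pi$, $\mathsf{Line}(\pi)$ denotes the set of all lines contained in $\pi$. *)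

(* Defs.v *)
(* PG(3,q) is modelled as the lattice of subspaces of F^4,
   F a finite field with q = #|F| elements.  A subspace is represented by its
   canonical matrix <<A>>%MS : 'M[F]_4 (rows span the subspace). *)
From HB Require Import structures.
From mathcomp Require Import all_boot all_order all_algebra all_fingroup all_field.
Set Implicit Arguments. Unset Strict Implicit. Unset Printing Implicit Defensive.
Import GRing.Theory.
Local Open Scope ring_scope.

Section PG3.
Variable F : finFieldType.

Definition subsp (k : nat) : {set 'M[F]_4} :=
  [set A : 'M[F]_4 | (\rank A == k)%N && (<<A>>%MS == A)].

Definition points : {set 'M[F]_4} := subsp 1.
Definition lines  : {set 'M[F]_4} := subsp 2.
Definition planes : {set 'M[F]_4} := subsp 3.

Definition Star (P : 'M[F]_4) : {set 'M[F]_4} :=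
  [set l in lines | (P <= l)%MS].
Definition Line (pi : 'M[F]_4) : {set 'M[F]_4} :=
  [set l in lines | (l <= pi)%MS].

Definition is_spread (S : {set 'M[F]_4}) : Prop :=
  [/\ S \subset lines,
      #|S| = (#|F| ^ 2 + 1)%N &
      forall P, P \in points -> exists! l, l \in S /\ (P <= l)%MS].

Definition CL_class (L : {set 'M[F]_4}) (x : nat) : Prop :=
  L \subset lines /\ forall S, is_spread S -> #|S :&: L| = x.

End PG3.

(* Main.v *)
Require Import Defs.
From HB Require Import structures.
From mathcomp Require Import all_boot all_order all_algebra all_fingroup all_field.
From mathcomp Require Import mxabelem zify.
Set Implicit Arguments. Unset Strict Implicit. Unset Printing Implicit Defensive.
Import GRing.Theory.

Section Aux.
Variable F : finFieldType.
Local Open Scope ring_scope.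

Lemma card_bigcup_le (I T : finType) (P : pred I) (G : I -> {set T}) :
  (#|\bigcup_(i | P i) G i| <= \sum_(i | P i) #|G i|)%N.
Proof.
elim/big_rec2: _ => [|i n U _ IH]; first by rewrite cards0.
apply: leq_trans (leq_card_setU _ _).1 _; by rewrite leq_add2l.
Qed.

Lemma spread_disj (S : {set 'M[F]_4}) l m :
  is_spread S -> l \in S -> m \in S -> (l :&: m)%MS != 0 -> l = m.
Proof.
case=> _ _ Hsp lS mS nz.
set v := nz_row (l :&: m)%MS.
have vnz : v != 0 by rewrite nz_row_eq0.
have vsub : (v <= l :&: m)%MS by apply: nz_row_sub.
have Pv : <<v>>%MS \in points F.
  by rewrite inE genmx_id eqxx andbT genmxE rank_rV vnz.
have [l0 [_ Hu]] := Hsp _ Pv.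
move: vsub; rewrite sub_capmx => /andP[vl vm].
have e1 : l0 = l by apply: Hu; split => //; rewrite genmxE.
have e2 : l0 = m by apply: Hu; split => //; rewrite genmxE.
by rewrite -e1 -e2.
Qed.

Lemma plane_lines_meet (l m pi : 'M[F]_4) :
  l \in lines F -> m \in lines F -> pi \in planes F ->
  (l <= pi)%MS -> (m <= pi)%MS -> (l :&: m)%MS != 0.
Proof.
rewrite !inE => /andP[/eqP rl _] /andP[/eqP rm _] /andP[/eqP rp _] lp mp.
have h := mxrank_sum_cap l m.
have h2 : (\rank (l + m)%MS <= \rank pi)%N by apply: mxrankS; rewrite addsmx_sub lp mp.
rewrite -mxrank_eq0; apply/eqP => h0.
rewrite h0 rl rm rp in h h2; lia.
Qed.

Lemma line_cap_plane (l pi : 'M[F]_4) :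
  l \in lines F -> ~~ (l <= pi)%MS -> (\rank (l :&: pi)%MS <= 1)%N.
Proof.
rewrite inE => /andP[/eqP rl _] nlp.
have h1 : (\rank (l :&: pi)%MS <= \rank l)%N by apply: mxrankS; exact: capmxSl.
have [h3 h4] := mxrank_leqif_eq (capmxSl l pi).
case: (ltnP (\rank (l :&: pi)%MS) 2) => // h2.
have : (l :&: pi == l)%MS.
  rewrite -h4 rl; move: h1; rewrite rl => h1; by rewrite eqn_leq h1 h2.
move=> /andP[_ lsub].
by rewrite (submx_trans lsub (capmxSr l pi)) in nlp.
Qed.

Lemma q_gt1 : (1 < #|F|)%N.
Proof.
have := subset_leq_card (subsetT [set (0 : F); 1]).
by rewrite cardsT cards2 eq_sym oner_neq0.
Qed.

Lemma spread_plane (S : {set 'M[F]_4}) (pi : 'M[F]_4) :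
  is_spread S -> pi \in planes F -> exists2 m, m \in S & (m <= pi)%MS.
Proof.
move=> Hs piP.
case: (pickP [pred m in S | (m <= pi)%MS]) => [m /andP[mS mp]|H]; first by exists m.
exfalso.
have [Ssub cardS Hsp] := Hs.
set V := rowg pi :\ 0.
have cV : #|V| = (#|F| ^ 3 - 1)%N.
  have := cardsD1 0 (rowg pi).
  rewrite card_rowg (group1 (rowg pi)).
  move: piP; rewrite inE => /andP[/eqP -> _] => ->; by rewrite add1n subSS subn0.
have sub : V \subset \bigcup_(m in S) (rowg (m :&: pi)%MS :\ 0).
  apply/subsetP => v; rewrite !inE => /andP[vnz vp].
  have Pv : <<v>>%MS \in points F.
    by rewrite inE genmx_id eqxx andbT genmxE rank_rV vnz.
  have [l [[lS vl] _]] := Hsp _ Pv.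
  apply/bigcupP; exists l => //; rewrite !inE vnz /= sub_capmx vp andbT.
  by move: vl; rewrite genmxE.
have le1 := subset_leq_card sub.
have le2 := card_bigcup_le (fun m => m \in S) (fun m => rowg (m :&: pi)%MS :\ 0).
have le3 : (\sum_(m in S) #|rowg (m :&: pi)%MS :\ (0%R : 'rV[F]_4)| <= \sum_(m in S) (#|F| - 1))%N.
  apply: leq_sum => m mS.
  have := cardsD1 (0%R : 'rV[F]_4) (rowg (m :&: pi)%MS).
  rewrite card_rowg (group1 (rowg _)) add1n => e.
  have nmp : ~~ (m <= pi)%MS by have := H m; rewrite /= mS /= => ->.
  have mL : m \in lines F by apply: (subsetP Ssub).
  have r1 := line_cap_plane mL nmp.
  have : (#|F| ^ \rank (m :&: pi)%MS <= #|F| ^ 1)%N.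
    by rewrite leq_pexp2l // ltnW // q_gt1.
  rewrite e expn1 => h5; move: (q_gt1) => h6; rewrite subn1 -ltnS prednK //; exact: ltnW.
have q2 := q_gt1.
have := leq_trans le1 (leq_trans le2 le3).
rewrite sum_nat_const cardS cV.
set q := #|F|.
rewrite !expnS expn0 muln1.
nia.
Qed.

End Aux.

Theorem lemma1 (F : finFieldType) (L : {set 'M[F]_4}) (x : nat)
  (P pi : 'M[F]_4) :
  CL_class L x ->
  P \in points F -> pi \in planes F -> (P <= pi)%MS ->
  (Line pi :\: Star P) :&: L = set0 ->
  Star P :\: Line pi \subset L ->
  CL_class ((L :|: (Line pi :\: Star P)) :\: (Star P :\: Line pi)) x.
Proof.
move=> [Lsub HL] PP piP Ppi HA HB.
have inLine l : (l \in Line pi) = (l \in lines F) && (l <= pi)%MS by rewrite /Line inE.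
have inStar l : (l \in Star P) = (l \in lines F) && (P <= l)%MS by rewrite /Star inE.
have HA' l : l \in Line pi -> l \notin Star P -> l \notin L.
  move=> h1 h2; apply/negP => h3.
  have : l \in (Line pi :\: Star P) :&: L by rewrite in_setI in_setD h1 h2 h3.
  by rewrite HA in_set0.
have HB' l : l \in Star P -> l \notin Line pi -> l \in L.
  move=> h1 h2; apply: (subsetP HB); by rewrite in_setD h1 h2.
split.
  apply/subsetP => l; rewrite in_setD in_setU in_setD => /andP[_ H].
  case/orP: H => [lL|H]; first exact: (subsetP Lsub).
  by move: H; rewrite in_setD inLine => /andP[_ /andP[]].
move=> S Hs.
have [Ssub cardS Hsp] := Hs.
have key : #|S :&: (Line pi :\: Star P)| = #|S :&: (Star P :\: Line pi)|.
  have [lP [[lPS PlP] HlP]] := Hsp P PP.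
  have lPL : lP \in lines F by apply: (subsetP Ssub).
  case: (boolP (lP <= pi)%MS) => lPpi.
    have -> : S :&: (Star P :\: Line pi) = set0.
      apply/setP => l; rewrite in_setI in_setD in_set0; apply/negbTE/negP.
      move=> /and3P[lS nlLi lSt].
      move: lSt; rewrite inStar => /andP[lL Pl].
      have e : lP = l by apply: HlP.
      by move: nlLi; rewrite inLine lL -e lPpi.
    have -> : S :&: (Line pi :\: Star P) = set0.
      apply/setP => l; rewrite in_setI in_setD in_set0; apply/negbTE/negP.
      move=> /and3P[lS nlSt lLi].
      move: lLi; rewrite inLine => /andP[lL lpi].
      have e : l = lP by apply: (spread_disj Hs) => //; apply: (plane_lines_meet lL lPL piP).
      by move: nlSt; rewrite inStar lL e PlP.
    by [].
  have [m mS mpi] := spread_plane Hs piP.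
  have mL : m \in lines F by apply: (subsetP Ssub).
  have -> : S :&: (Star P :\: Line pi) = [set lP].
    apply/setP => l; rewrite in_setI in_setD in_set1; apply/idP/idP.
      move=> /and3P[lS nlLi lSt].
      move: lSt; rewrite inStar => /andP[lL Pl].
      by apply/eqP; apply/esym/HlP.
    move=> /eqP ->; rewrite lPS inStar lPL PlP inLine lPL /=.
    by rewrite (negbTE lPpi).
  have -> : S :&: (Line pi :\: Star P) = [set m].
    apply/setP => l; rewrite in_setI in_setD in_set1; apply/idP/idP.
      move=> /and3P[lS nlSt lLi].
      move: lLi; rewrite inLine => /andP[lL lpi].
      apply/eqP; apply: (spread_disj Hs) => //; exact: (plane_lines_meet lL mL piP lpi mpi).
    move=> /eqP ->; rewrite mS inLine mL mpi inStar mL /= andbT.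
    apply/negP => Pm.
    have e : lP = m by apply: HlP.
    by move: lPpi; rewrite e mpi.
  by rewrite !cards1.
have e1 : S :&: ((L :|: (Line pi :\: Star P)) :\: (Star P :\: Line pi)) =
  (S :&: L :\: (Star P :\: Line pi)) :|: (S :&: (Line pi :\: Star P)).
  apply/setP => l; rewrite !(in_setI, in_setD, in_setU).
  move: (HA' l) (HB' l).
  case: (l \in S); case: (l \in Line pi); case: (l \in Star P); case: (l \in L) => //=;
    by move=> h1 h2; first [have := h1 isT isT | have := h2 isT isT].
have e2 : (S :&: L :\: (Star P :\: Line pi)) :&: (S :&: (Line pi :\: Star P)) = set0.
  apply/setP => l; rewrite !(in_setI, in_setD, in_set0).
  move: (HA' l) (HB' l).
  case: (l \in S); case: (l \in Line pi); case: (l \in Star P); case: (l \in L) => //=;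
    by move=> h1 h2; first [have := h1 isT isT | have := h2 isT isT].
have e3 : S :&: L :&: (Star P :\: Line pi) = S :&: (Star P :\: Line pi).
  apply/setP => l; rewrite !(in_setI, in_setD).
  move: (HA' l) (HB' l).
  case: (l \in S); case: (l \in Line pi); case: (l \in Star P); case: (l \in L) => //=;
    by move=> h1 h2; first [have := h1 isT isT | have := h2 isT isT].
have e4 := cardsID (Star P :\: Line pi) (S :&: L).
rewrite e3 HL // in e4.
rewrite e1 cardsU e2 cards0 subn0 key.
lia.
Qed.
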